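(* Let $2\le j\le n$ and let $K_j\subset\wedge^j\mathbb{R}^n$ be a proper cone. Then $\widehat{T}(K_j)$, if it is not $\{0\}$, coincides with the union of all $j$-dimensional linear subspaces $L\subset\mathbb{R}^n$ for which the line $\mathcal{A}_j(L)$ is contained in $K_j\cup(-K_j)$. The set $T(K_j)$, if it is nonempty, coincides with the closure of the union of all $j$-dimensional linear subspaces $L\subset\mathbb{R}^n$ for which the nonzero elements of the line $\mathcal{A}_j(L)$ lie in $\operatorname{int}(K_j)\cup\operatorname{int}(-K_j)$.
   Context: A proper cone is a closed convex cone that is pointed and solid. $\wedge^j\mathbb{R}^n$ is the $j$th exterior power of $\mathbb{R}^n$. For a $j$-dimensional subspace $L\subset\mathbb{R}^n$, $\mathcal{A}_j(L)=\{t(x_1\wedge\cdots\wedge x_j):t\in\mathbb{R}\}$ for any basis $x_1,\ldots,x_j$ of $L$ (well defined). $\widehat{T}(K_j)$ is the set of all $x_1\in\mathbb{R}^n$ for which there exist $x_2,\ldots,x_j\in\mathbb{R}^n$ with $x_1\wedge\cdots\wedge x_j\in(K_j\cup(-K_j))\setminus\{0\}$, together with $0$. $T(K_j)$ is the closure of the set of all $x_1\in\mathbb{R}^n$ for which there exist $x_2,\ldots,x_j\in\mathbb{R}^n$ with $x_1\wedge\cdots\wedge x_j\in\operatorname{int}(K_j)\cup\operatorname{int}(-K_j)$. *)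

(* Defs.v *)
From HB Require Import structures.
From mathcomp Require Import all_boot all_order all_algebra.
From mathcomp Require Import all_classical all_reals all_analysis.
Set Implicit Arguments. Unset Strict Implicit. Unset Printing Implicit Defensive.
Import Order.TTheory GRing.Theory Num.Theory.
Import numFieldNormedType.Exports.
Local Open Scope classical_set_scope.
Local Open Scope ring_scope.

(* The j-element subsets of {0,...,n-1}: index set of the standard basis
   e_I = e_{i_1} /\ ... /\ e_{i_j} (i_1 < ... < i_j) of the exterior power. *)
Notation jsub n j := {S : {set 'I_n} | #|S| == j}.

(* Concrete model of the j-th exterior power of R^n: coordinate vectors
   indexed by the j-subsets (via enum_rank), dimension C(n,j). *)
Notation ext R n j := 'rV[R]_#|{: jsub n j}|.

(* l-th smallest element of the j-subset S. *)
Definition jcol n j (S : jsub n j) (l : 'I_j) : 'I_n :=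
  enum_val (cast_ord (esym (eqP (valP S))) l).

(* x_1 /\ ... /\ x_j, given by its Pluecker coordinates (j x j minors). *)
Definition wedge (R : realType) n j (x : 'I_j -> 'rV[R]_n) : ext R n j :=
  \row_(i < #|{: jsub n j}|)
     \det (\matrix_(k < j, l < j) x k 0 (jcol (enum_val i) l)).

Definition negset (V : zmodType) (K : set V) : set V := [set v | K (- v)].

Definition proper_cone (R : realType) n j (K : set (ext R n j)) : Prop :=
  closed K /\ K 0 /\
  (forall u v, K u -> K v -> K (u + v)) /\
  (forall (t : R) v, 0 <= t -> K v -> K (t *: v)) /\
  (K `&` negset K = [set 0]) /\
  (interior K !=set0).

Definition That (R : realType) n j (K : set (ext R n j)) : set 'rV[R]_n :=
  [set y | exists (x : 'I_j -> 'rV[R]_n) (i : 'I_j), (i : nat) = 0%N /\ x i = y /\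
            (K `|` negset K) (wedge x) /\ wedge x <> 0] `|` [set 0].

Definition Tset (R : realType) n j (K : set (ext R n j)) : set 'rV[R]_n :=
  closure [set y | exists (x : 'I_j -> 'rV[R]_n) (i : 'I_j), (i : nat) = 0%N /\
            x i = y /\ (interior K `|` interior (negset K)) (wedge x)].

(* A_j(L) for a subspace L of R^n, given as the row space of a square matrix:
   all multiples t (x_1 /\ ... /\ x_j) for a basis x_1..x_j of L. *)
Definition Aj (R : realType) n j (L : 'M[R]_n) : set (ext R n j) :=
  [set v | exists (x : 'I_j -> 'rV[R]_n) (t : R),
     row_free (\matrix_(k < j) x k) /\ (\matrix_(k < j) x k == L)%MS /\
     v = t *: wedge x].

(* Main.v *)
Require Import Defs.
From HB Require Import structures.
From mathcomp Require Import all_boot all_order all_algebra.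
From mathcomp Require Import all_classical all_reals all_analysis.
Import Order.TTheory GRing.Theory Num.Theory.
Import numFieldNormedType.Exports.
Local Open Scope classical_set_scope.
Local Open Scope ring_scope.
Set Implicit Arguments.

Lemma wedge_mul (R : realType) n j (x x' : 'I_j -> 'rV[R]_n) (A : 'M[R]_j) :
 (\matrix_(k<j) x' k) = A *m (\matrix_(k<j) x k) -> wedge x' = \det A *: wedge x.
Proof.
move=> E; apply/rowP => i; rewrite !mxE -det_mulmx; congr (\det _); apply/matrixP => k l.
have := congr1 (fun M : 'M[R]_(j,n) => M k (jcol (enum_val i) l)) E; rewrite !mxE => ->.
by apply: eq_bigr => m _; rewrite !mxE.
Qed.

Lemma wedge_free (R : realType) n j (x : 'I_j -> 'rV[R]_n) :
  wedge x <> 0 -> row_free (\matrix_(k<j) x k).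
Proof.
move=> nz; apply/negPn/negP => nf; apply: nz; apply/rowP => i; rewrite !mxE.
apply/eqP; apply: contraNT nf => dz.
set M := \matrix_(k, l) _ in dz.
have hM : row_free M by rewrite row_free_unit unitmxE unitfE dz.
have EM : M = (\matrix_(k<j) x k) *m (\matrix_(m<n, l<j) (m == jcol (enum_val i) l)%:R).
  apply/matrixP => k l; rewrite !mxE (bigD1 (jcol (enum_val i) l)) //= !mxE eqxx mulr1.
  rewrite big1 ?addr0 // => m /negPf ne; by rewrite !mxE ne mulr0.
rewrite /row_free eqn_leq rank_leq_row /=.
move: hM; rewrite /row_free EM => /eqP {1}<-.
exact: mxrankM_maxl.
Qed.

Lemma free_wedge (R : realType) n j (x : 'I_j -> 'rV[R]_n) :
  row_free (\matrix_(k<j) x k) -> wedge x <> 0.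
Proof.
move=> fr.
set Xt := (\matrix_(k<j) x k)^T.
have rXt : \rank Xt = j by rewrite mxrank_tr; apply/eqP.
set f := maxrankfun Xt.
have ff := maxrowsub_free Xt.
pose S : {set 'I_n} := [set f k | k in 'I_(\rank Xt)]%SET.
have cS : #|S| == j by rewrite card_imset ?card_ord ?rXt //; exact: maxrankfun_inj.
pose SS : jsub n j := exist _ S cS.
pose g := jcol SS.
have sub : (rowsub f Xt <= rowsub g Xt)%MS.
  apply/row_subP => k; rewrite row_rowsub.
  have Hk : f k \in S by apply/imsetP; exists k.
  pose l := cast_ord (eqP cS) (enum_rank_in Hk (f k)).
  have -> : f k = g l.
    rewrite /g /jcol /l /=; rewrite -[LHS](enum_rankK_in Hk Hk); congr enum_val; exact: val_inj.
  by rewrite -row_rowsub row_sub.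
have rg : \rank (rowsub g Xt) = j.
  apply/eqP; rewrite eqn_leq rank_leq_row /=.
  by move: (mxrankS sub); rewrite (eqP ff) rXt.
have : \det (rowsub g Xt) != 0.
  by rewrite -unitfE -unitmxE -row_free_unit /row_free rg.
move=> nz0 /rowP /(_ (enum_rank SS)); rewrite !mxE enum_rankK => E.
move: nz0; rewrite -det_tr; set N := _^T.
have -> : N = \matrix_(k, l) x k 0 (jcol SS l) by apply/matrixP => k l; rewrite !mxE.
by rewrite E eqxx.
Qed.

Lemma basis_with (R : realType) n j (B : 'M[R]_(j,n)) (y : 'rV[R]_n) (i0 : 'I_j) :
  (y <= B)%MS -> y != 0 ->
  exists x : 'I_j -> 'rV[R]_n, x i0 = y /\ (\matrix_(k<j) x k == B)%MS.
Proof.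
case/submxP => c Ey ynz.
have [i1 ci1] : exists i1, c 0 i1 != 0.
  apply/existsP; apply: contraNT ynz => /existsPn H; rewrite Ey.
  have -> : c = 0 by apply/rowP => i; rewrite mxE; have := H i; rewrite negbK => /eqP.
  by rewrite mul0mx.
pose s k := if k == i0 then i1 else if k == i1 then i0 else k.
have sK : forall k, s (s k) = k.
  move=> k; rewrite /s; case: (eqVneq k i0) => [->|n0].
    by rewrite eqxx; case: (eqVneq i1 i0) => [->|]; rewrite ?eqxx.
  case: (eqVneq k i1) => [->|n1]; first by rewrite eqxx.
  by rewrite (negPf n0) (negPf n1).
pose x k := if k == i0 then y else row (s k) B.
exists x; split; first by rewrite /x eqxx.
have XB : (\matrix_(k<j) x k <= B)%MS.
  apply/row_subP => k; rewrite rowK /x; case: ifP => _; first by rewrite Ey submxMl.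
  exact: row_sub.
have yX : (y <= \matrix_(k<j) x k)%MS.
  have -> : y = row i0 (\matrix_(k<j) x k) by rewrite rowK /x eqxx.
  exact: row_sub.
have oth : forall l, l != i1 -> (row l B <= \matrix_(k<j) x k)%MS.
  move=> l nl.
  have sl : s l != i0.
    apply: contra nl => /eqP E; apply/eqP; rewrite -(sK l) E /s eqxx //.
  have -> : row l B = row (s l) (\matrix_(k<j) x k).
    by rewrite rowK /x (negPf sl) sK.
  exact: row_sub.
apply/andP; split => //.
apply/row_subP => l; case: (eqVneq l i1) => [->|nl]; last exact: oth.
have E2 : row i1 B = (c 0 i1)^-1 *: (y - \sum_(l | l != i1) c 0 l *: row l B).
  rewrite Ey mulmx_sum_row (bigD1 i1) //= addrK scalerA mulVf // scale1r //.
rewrite E2 scalemx_sub // addmx_sub // -scaleN1r scalemx_sub //.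
by apply: summx_sub => l0 nl0; rewrite scalemx_sub // oth.
Qed.
Lemma nbhsE' (R : realType) m (x : 'rV[R]_m) (P : set 'rV[R]_m) :
  nbhs x P <-> exists2 e : R, 0 < e & forall z, `|x - z| < e -> P z.
Proof.
split.
  by move/nbhs_normP => [e e0 H]; exists e => // z hz; apply: H.
by move=> [e e0 H]; apply: (proj2 (nbhs_normP x P)); exists e => // z hz; apply: H.
Qed.

Lemma int_scale (R : realType) m (A : set 'rV[R]_m) (w : 'rV[R]_m) (t : R) :
  (forall (s : R) v, 0 < s -> A v -> A (s *: v)) ->
  interior A w -> 0 < t -> interior A (t *: w).
Proof.
move=> Asc /nbhsE' [e e0 H] t0; apply/nbhsE'; exists (t * e); first exact: mulr_gt0.
move=> z hz.
have -> : z = t *: (t^-1 *: z) by rewrite scalerA mulfV ?gt_eqF // scale1r.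
apply: Asc => //; apply: H.
have -> : w - t^-1 *: z = t^-1 *: (t *: w - z).
  by rewrite scalerBr scalerA mulVf ?gt_eqF // scale1r.
rewrite normrZ gtr0_norm ?invr_gt0 // ltr_pdivrMl //.
Qed.

Lemma int_neg (R : realType) m (A : set 'rV[R]_m) (w : 'rV[R]_m) :
  interior A w -> interior (negset A) (- w).
Proof.
move=> /nbhsE' [e e0 H]; apply/nbhsE'; exists e => // z hz.
rewrite /negset /=; apply: H.
suff -> : w - - z = - (- w - z) by rewrite normrN.
by rewrite opprB !opprK addrC.
Qed.

Lemma negsetK (V : zmodType) (A : set V) : negset (negset A) = A.
Proof. by apply/seteqP; split => v; rewrite /negset /= opprK. Qed.

Lemma closure_scale (R : realType) m (A : set 'rV[R]_m) (y : 'rV[R]_m) :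
  (forall (s : R) v, 0 < s -> A v -> A (s *: v)) -> A y -> closure A 0.
Proof.
move=> Asc Ay B /nbhsE' [e e0 H].
have t0 : 0 < e / (`|y| + 1) by rewrite divr_gt0 // ltr_pwDr.
exists ((e / (`|y| + 1)) *: y); split; first exact: Asc.
apply: H; rewrite sub0r normrN normrZ gtr0_norm //.
rewrite mulrAC ltr_pdivrMr ?ltr_pwDr // ltr_pM2l // ltrDl //.
Qed.

Lemma zero_not_int (R : realType) m (A : set 'rV[R]_m) (i0 : 'I_m) :
  A `&` negset A = [set 0] -> ~ interior A 0.
Proof.
move=> pt /nbhsE' [e e0 H].
pose d : 'rV[R]_m := delta_mx 0 i0.
have dnz : d != 0.
  apply/eqP => /rowP /(_ i0); rewrite !mxE !eqxx /= => /eqP; by rewrite oner_eq0.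
have t0 : 0 < e / (`|d| + 1) by rewrite divr_gt0 // ltr_pwDr.
have lt : `|(e / (`|d| + 1)) *: d| < e.
  rewrite normrZ gtr0_norm //.
  rewrite mulrAC ltr_pdivrMr ?ltr_pwDr // ltr_pM2l // ltrDl //.
have : (A `&` negset A) ((e / (`|d| + 1)) *: d).
  split; apply: H; rewrite sub0r ?opprK ?normrN //.
rewrite pt => /eqP; rewrite scaler_eq0 (negPf dnz) orbF => /eqP.
by move/gt_eqF: t0 => /eqP.
Qed.

Lemma wedge_scale (R : realType) n j (x : 'I_j -> 'rV[R]_n) (i0 : 'I_j) (t : R) :
  wedge (fun k => if k == i0 then t *: x k else x k) = t *: wedge x.
Proof.
pose d : 'rV[R]_j := \row_k (if k == i0 then t else 1).
rewrite (@wedge_mul R n j x _ (diag_mx d)).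
  rewrite det_diag (bigD1 i0) //= big1 ?mulr1 ?mxE ?eqxx //.
  by move=> k /negPf nk; rewrite mxE nk.
apply/matrixP => k l; rewrite mul_diag_mx !mxE.
by case: eqP => _; rewrite ?mul1r ?mxE.
Qed.

Lemma jsub_inh n j : (j <= n)%N -> 'I_#|{: jsub n j}|.
Proof.
move=> hjn.
pose S : {set 'I_n} := [set widen_ord hjn k | k in 'I_j]%SET.
have cS : #|S| == j.
  rewrite card_imset ?card_ord //.
  by move=> a b /(congr1 val) /= /val_inj.
exact: enum_rank (exist _ S cS : jsub n j).
Qed.

Lemma Aj_sub (R : realType) n j (x : 'I_j -> 'rV[R]_n) (L : 'M[R]_n) v :
  (\matrix_(k<j) x k == L)%MS -> Aj L v -> exists t : R, v = t *: wedge x.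
Proof.
move=> EL [x' [t [_ [E' ->]]]].
have : (\matrix_(k<j) x' k <= \matrix_(k<j) x k)%MS.
  by rewrite (eqmxP E') (eqmxP EL).
case/submxP => D ED; exists (t * \det D).
by rewrite (@wedge_mul _ _ _ _ _ _ ED) scalerA.
Qed.

Lemma Aj_in (R : realType) n j (x : 'I_j -> 'rV[R]_n) (L : 'M[R]_n) :
  row_free (\matrix_(k<j) x k) -> (\matrix_(k<j) x k == L)%MS -> Aj L (wedge x).
Proof. by move=> fr EL; exists x, 1; rewrite scale1r. Qed.

Unset Implicit Arguments.

Theorem lemma3 (R : realType) (n j : nat) (K : set (ext R n j)) :
  (2 <= j)%N -> (j <= n)%N -> proper_cone K ->
  (That K <> [set 0] ->
     That K = [set y | exists L : 'M[R]_n, \rank L = j /\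
                 @Aj R n j L `<=` K `|` negset K /\ (y <= L)%MS]) /\
  (Tset K <> set0 ->
     Tset K = closure [set y | exists L : 'M[R]_n, \rank L = j /\
                 @Aj R n j L `\ 0 `<=` interior K `|` interior (negset K) /\ (y <= L)%MS]).
Proof.
move=> j2 jn [Kcl [K0 [KD [KZ [Kpt Kint]]]]].
pose i0 : 'I_j := Ordinal (leq_trans (isT : (1 <= 2)%N) j2).
have rowX : forall (x : 'I_j -> 'rV[R]_n) i, (x i <= \matrix_(k<j) x k)%MS.
  move=> x i; have -> : x i = row i (\matrix_(k<j) x k) by rewrite rowK.
  exact: row_sub.
have genE : forall (x : 'I_j -> 'rV[R]_n), (\matrix_(k<j) x k == <<\matrix_(k<j) x k>>)%MS.
  by move=> x; apply/eqmxP; apply: eqmx_sym; apply: genmxE.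
have getB : forall L : 'M[R]_n, \rank L = j ->
    exists B : 'M[R]_(j,n), row_free B /\ (B == L)%MS.
  move=> L rL.
  have : exists r (B : 'M[R]_(r,n)), r = j /\ row_free B /\ (B == L)%MS.
    exists (\rank L), (row_base L); split => //; split; first exact: row_base_free.
    by apply/eqmxP; exact: eq_row_base.
  by move=> [r [B [er [fB EB]]]]; subst r; exists B.
have build : forall (L : 'M[R]_n) y, \rank L = j -> (y <= L)%MS -> y != 0 ->
    exists x : 'I_j -> 'rV[R]_n, x i0 = y /\ row_free (\matrix_(k<j) x k) /\
       (\matrix_(k<j) x k == L)%MS.
  move=> L y rL yL ynz; have [B [fB EB]] := getB L rL.
  have yB : (y <= B)%MS by rewrite (eqmxP EB).
  have [x [xi0 EX]] := @basis_with _ _ _ B y i0 yB ynz.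
  exists x; split => //; split; first by rewrite /row_free (eqmx_rank EX).
  by apply/eqmxP; apply: eqmx_trans (eqmxP EX) (eqmxP EB).
split.
  have Cs : forall (t : R) w, (K `|` negset K) w -> (K `|` negset K) (t *: w).
    move=> t w Cw; have [t0|t0] := leP 0 t.
      case: Cw => Kw; [left; exact: KZ | right; rewrite /negset /= -scalerN; exact: KZ].
    have nt0 : 0 <= - t by rewrite oppr_ge0 ltW.
    case: Cw => Kw.
      by right; rewrite /negset /= -scaleNr; exact: KZ.
    by left; rewrite -[t *: w]opprK -scalerN -scaleNr; exact: KZ.
  have hP : forall x : 'I_j -> 'rV[R]_n, wedge x <> 0 -> (K `|` negset K) (wedge x) ->
      exists L : 'M[R]_n, \rank L = j /\ Aj L `<=` (K `|` negset K) /\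
        (\matrix_(k<j) x k <= L)%MS.
    move=> x nz Cw; exists <<\matrix_(k<j) x k>>%MS; split.
      by rewrite mxrank_gen; apply/eqP; exact: wedge_free.
    split; last by rewrite genmxE.
    by move=> v /(@Aj_sub _ _ _ _ _ _ (genE x)) [t ->]; exact: Cs.
  move=> HT; apply/seteqP; split => y.
    case => [[x [i [_ [<- [Cw nz]]]]] | ->].
      have [L [rL [AL XL]]] := hP x nz Cw.
      by exists L; split => //; split => //; apply: submx_trans (rowX x i) XL.
    have : exists z, That K z /\ z <> 0.
      apply: contrapT => H; apply: HT; apply/seteqP; split => z.
        by move=> Tz; apply: contrapT => nz; apply: H; exists z.
      by move=> ->; right.
    move=> [z [Tz znz]].
    case: Tz => [[x [i [_ [_ [Cw wnz]]]]] | z0]; last by [].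
    have [L [rL [AL XL]]] := hP x wnz Cw.
    by exists L; split => //; split => //; exact: sub0mx.
  move=> [L [rL [AL yL]]]; case: (eqVneq y 0) => [->|ynz]; first by right.
  left; have [x [xi0 [fX EXL]]] := build L y rL yL ynz.
  exists x, i0; split => //; split => //; split.
    by apply: AL; exact: Aj_in.
  exact: free_wedge.
move=> HT.
pose I := interior K `|` interior (negset K).
have Kpos : forall (s : R) v, 0 < s -> K v -> K (s *: v).
  by move=> s v s0 Kv; apply: KZ => //; exact: ltW.
have NKpos : forall (s : R) v, 0 < s -> negset K v -> negset K (s *: v).
  by move=> s v s0 Kv; rewrite /negset /= -scalerN; apply: KZ => //; exact: ltW.
have Ineg : forall w, I w -> I (- w).
  move=> w [Iw|Iw]; first by right; exact: int_neg.
  by left; have := int_neg Iw; rewrite negsetK.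
have Ipos : forall (s : R) w, 0 < s -> I w -> I (s *: w).
  move=> s w s0 [Iw|Iw]; first by left; exact: int_scale.
  by right; exact: int_scale.
have Isc : forall (s : R) w, s != 0 -> I w -> I (s *: w).
  move=> s w snz Iw; have [s0|s0] := ltP 0 s; first exact: Ipos.
  have s0' : s < 0 by rewrite lt_neqAle snz s0.
  rewrite -[s *: w]opprK -scalerN -scaleNr; apply: Ipos; last exact: Ineg.
  by rewrite oppr_gt0.
have I0 : ~ I 0.
  have im := @jsub_inh n j jn.
  case.
    exact: (zero_not_int im Kpt).
  apply: (zero_not_int im); rewrite negsetK setIC; exact: Kpt.
pose S1 := [set y | exists (x : 'I_j -> 'rV[R]_n) (i : 'I_j), (i : nat) = 0%N /\ x i = y /\ (interior K `|` interior (negset K)) (wedge x)].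
have S1sub : S1 `<=` [set y | exists L : 'M[R]_n, \rank L = j /\
                 @Aj R n j L `\ 0 `<=` interior K `|` interior (negset K) /\ (y <= L)%MS].
  move=> y [x [i [_ [<- Iw]]]].
  have wnz : wedge x <> 0 by move=> E; apply: I0; rewrite -E.
  exists <<\matrix_(k<j) x k>>%MS; split.
    by rewrite mxrank_gen; apply/eqP; exact: wedge_free.
  split; last by rewrite genmxE.
  move=> v [Av vnz]; have [t Et] := @Aj_sub _ _ _ _ _ _ (genE x) Av.
  rewrite Et; apply: Isc => //; apply: contra_notN vnz => /eqP t0.
  by rewrite Et t0 scale0r.
have S1sc : forall (s : R) y, 0 < s -> S1 y -> S1 (s *: y).
  move=> s y s0 [x [i [i00 [<- Iw]]]].
  exists (fun k => if k == i then s *: x k else x k), i.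
  split; first exact: i00.
  split; first by rewrite eqxx.
  have -> : wedge (fun k => if k == i then s *: x k else x k) = s *: wedge x.
    exact: wedge_scale.
  exact: Ipos.
have S2sub : [set y | exists L : 'M[R]_n, \rank L = j /\
                 @Aj R n j L `\ 0 `<=` interior K `|` interior (negset K) /\ (y <= L)%MS]
           `<=` closure S1.
  move=> y [L [rL [AL yL]]]; case: (eqVneq y 0) => [->|ynz].
    have [y1 S1y1] : S1 !=set0.
      apply/set0P/negP => /eqP E; apply: HT; rewrite /Tset -/S1.
      by rewrite E closure0.
    exact: (@closure_scale _ _ S1 y1 S1sc S1y1).
  apply: subset_closure.
  have [x [xi0 [fX EXL]]] := build L y rL yL ynz.
  exists x, i0; split => //; split => //; apply: AL; split; first exact: Aj_in.
  exact: free_wedge.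
rewrite /Tset -/S1; apply/seteqP; split; first exact: closureS.
apply: subset_trans (closureS S2sub) _.
have E : closure S1 = closure (closure S1) by apply/closure_id; exact: closed_closure.
by rewrite -E.
Qed.
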